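(* Let $c\ge1$ and let $G$ be a finite nilpotent group of class $t\ge1$. For $2\le j\le t$ put $Q_j=G/\gamma_j(G)$ and for $1\le j\le t-1$ let $e_j=\min\{\exp(Q_{j+1}),\exp(\gamma_{j+1}(G))\}$. Then $$\exp(M^{(c)}(G))\le\exp(G/G')\prod_{j=1}^{t-1}e_j.$$ In particular, if $G$ is a $p$-group of exponent $p^e$, then $\exp(M^{(c)}(G))\le p^{et}$.
   Context: $\gamma_1(X)=X$, $\gamma_{i+1}(X)=[\gamma_i(X),X]$; $G'=\gamma_2(G)$. The $c$-nilpotent multiplier of $G\cong F/R$ ($F$ free) is $M^{(c)}(G)=(R\cap\gamma_{c+1}(F))/[R,{}_cF]$, where $[R,{}_0F]=R$, $[R,{}_{i+1}F]=[[R,{}_iF],F]$; it is independent of the presentation. $\exp(X)$ is the exponent of $X$. *)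

(* Defs.v *)
(* The finite group G is a mathcomp finGroupType group; the
   free group F of a free presentation is an abstract (possibly infinite)
   group, defined below from scratch since MathComp has no infinite groups. *)
From mathcomp Require Import all_boot all_fingroup all_solvable.
Set Implicit Arguments. Unset Strict Implicit. Unset Printing Implicit Defensive.

Record Grp := {
  gcar :> Type;
  gmul : gcar -> gcar -> gcar;
  ginv : gcar -> gcar;
  gone : gcar;
  gmulA : forall x y z, gmul x (gmul y z) = gmul (gmul x y) z;
  gmul1 : forall x, gmul gone x = x;
  gmulV : forall x, gmul (ginv x) x = gone
}.

Definition is_hom (F H : Grp) (f : F -> H) : Prop :=
  forall x y, f (gmul x y) = gmul (f x) (f y).

Definition is_free (F : Grp) : Prop :=
  exists (X : Type) (i : X -> F),
    forall (H : Grp) (f : X -> H),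
      exists phi : F -> H,
        [/\ is_hom phi, (forall x, phi (i x) = f x) &
            forall psi : F -> H, is_hom psi -> (forall x, psi (i x) = f x) ->
              forall y, psi y = phi y].

Section AbstractGroup.
Variable F : Grp.

Fixpoint gpow (x : F) (n : nat) : F :=
  match n with 0 => gone F | n'.+1 => gmul (gpow x n') x end.

Definition gcomm (x y : F) : F := gmul (gmul (ginv x) (ginv y)) (gmul x y).

Inductive gen (S : F -> Prop) : F -> Prop :=
| gen_in x : S x -> gen S x
| gen_one : gen S (gone F)
| gen_mul x y : gen S x -> gen S y -> gen S (gmul x y)
| gen_inv x : gen S x -> gen S (ginv x).

Definition comm_sub (A B : F -> Prop) : F -> Prop :=
  gen (fun z => exists a b, A a /\ B b /\ z = gcomm a b).

Definition fullF : F -> Prop := fun _ => True.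

Fixpoint gamma (i : nat) : F -> Prop :=
  match i with
  | 0 | 1 => fullF
  | i'.+1 => comm_sub (gamma i') fullF
  end.

Fixpoint iter_comm (R : F -> Prop) (k : nat) : F -> Prop :=
  match k with 0 => R | k'.+1 => comm_sub (iter_comm R k') fullF end.

(* exp(A/B) <= m, for B <= A (A/B of finite exponent): some positive
   n <= m kills the quotient A/B. *)
Definition quot_exp_le (A B : F -> Prop) (m : nat) : Prop :=
  exists n, 0 < n <= m /\ forall x, A x -> B (gpow x n).

(* exp(M^(c)(G)) <= m for the presentation F/R, R the kernel. *)
Definition cmult_exp_le (R : F -> Prop) (c m : nat) : Prop :=
  quot_exp_le (fun x => R x /\ gamma c.+1 x) (iter_comm R c) m.

End AbstractGroup.

(* Main.v *)
Require Import Defs.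
From mathcomp Require Import all_boot all_fingroup all_solvable.
Set Implicit Arguments. Unset Strict Implicit. Unset Printing Implicit Defensive.

Section Basic.
Variable F : Grp.
Local Infix "**" := (@gmul F) (at level 40, left associativity).
Local Notation "1'" := (gone F).

Lemma mulgV_ (x : F) : x ** ginv x = 1'.
Proof.
have e : x ** ginv x = ginv (ginv x) ** ginv x ** (x ** ginv x).
  by rewrite gmulV gmul1.
rewrite e gmulA -(gmulA (ginv (ginv x))) gmulV.
by rewrite -gmulA gmul1 gmulV.
Qed.

Lemma mulg1_ (x : F) : x ** 1' = x.
Proof. by rewrite -(gmulV x) gmulA mulgV_ gmul1. Qed.

Lemma gc1 (u x : F) : u ** ginv x ** x = u.
Proof. by rewrite -gmulA gmulV mulg1_. Qed.
Lemma gc2 (u x : F) : u ** x ** ginv x = u.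
Proof. by rewrite -gmulA mulgV_ mulg1_. Qed.
Lemma gc3 (x y : F) : ginv x ** x ** y = y.
Proof. by rewrite gmulV gmul1. Qed.
Lemma gc4 (x y : F) : x ** ginv x ** y = y.
Proof. by rewrite mulgV_ gmul1. Qed.

Lemma ginv_uniq (x y : F) : x ** y = 1' -> ginv x = y.
Proof. by move=> h; rewrite -[ginv x]mulg1_ -h gmulA gmulV gmul1. Qed.

Lemma ginvK (x : F) : ginv (ginv x) = x.
Proof. by apply: ginv_uniq; rewrite gmulV. Qed.

Lemma ginvM (x y : F) : ginv (x ** y) = ginv y ** ginv x.
Proof. apply: ginv_uniq; by rewrite !gmulA gc2 mulgV_. Qed.

Lemma ginv1 : ginv 1' = 1'.
Proof. by apply: ginv_uniq; rewrite gmul1. Qed.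

Ltac gsimpl := rewrite /gcomm ?ginvM ?ginvK ?ginv1 ?gmulA;
  rewrite ?(gc1, gc2, gc3, gc4, gmul1, mulg1_, gmulV, mulgV_).

Lemma I1 (x y z : F) :
  gcomm (x ** y) z = gcomm x z ** gcomm (gcomm x z) y ** gcomm y z.
Proof. by gsimpl. Qed.

Lemma I2 (a f g : F) :
  ginv g ** gcomm a f ** g = ginv (gcomm a g) ** gcomm a (f ** g).
Proof. by gsimpl. Qed.

Lemma I3 (x y : F) : x ** y = y ** x ** gcomm x y.
Proof. by gsimpl. Qed.

Lemma I4 (w f : F) : gcomm w f = ginv w ** (ginv f ** w ** f).
Proof. by gsimpl. Qed.

Lemma I5 (f : F) : gcomm 1' f = 1'.
Proof. by gsimpl. Qed.

End Basic.

Section Sub.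
Variable F : Grp.
Local Infix "**" := (@gmul F) (at level 40, left associativity).
Local Notation "1'" := (gone F).

Definition subgrp (A : F -> Prop) :=
  [/\ A 1', (forall x y, A x -> A y -> A (x ** y)) & forall x, A x -> A (ginv x)].
Definition normalp (A : F -> Prop) := forall x g, A x -> A (ginv g ** x ** g).

Lemma gen_subgrp S : subgrp (gen S).
Proof. split; [exact: gen_one | exact: gen_mul | exact: gen_inv]. Qed.

Lemma gen_min (S H : F -> Prop) : (forall x, S x -> H x) -> subgrp H ->
  forall x, gen S x -> H x.
Proof.
move=> sSH [H1 HM HV] x; elim=> [y /sSH // | // | y z _ ? _ ? | y _ ?]; auto.
Qed.

Lemma comm_sub_mono (A A' B : F -> Prop) : (forall x, A x -> A' x) ->
  forall x, comm_sub A B x -> comm_sub A' B x.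
Proof.
move=> sAA'; apply: gen_min; last exact: gen_subgrp.
move=> z [a [b [Ha [Hb ->]]]]; apply: gen_in; exists a, b; auto.
Qed.

Lemma comm_sub_normal (A : F -> Prop) : normalp (comm_sub A (@fullF F)).
Proof.
move=> x g; elim=> [z [a [b [Ha [_ ->]]]] | | y z _ Hy _ Hz | y _ Hy].
- rewrite I2; apply: gen_mul.
    by apply: gen_inv; apply: gen_in; exists a, g.
  by apply: gen_in; exists a, (b ** g).
- by rewrite mulg1_ gmulV; apply: gen_one.
- have -> : ginv g ** (y ** z) ** g = (ginv g ** y ** g) ** (ginv g ** z ** g).
    by rewrite !gmulA gc2.
  exact: gen_mul.
- have -> : ginv g ** ginv y ** g = ginv (ginv g ** y ** g).
    by rewrite !ginvM ginvK !gmulA.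
  exact: gen_inv.
Qed.

Definition nsg (A : F -> Prop) := subgrp A /\ normalp A.

Lemma gpowS' (x : F) n : gpow x n.+1 = x ** gpow x n.
Proof.
elim: n => [|n IH]; first by rewrite /= gmul1 mulg1_.
by change (gpow x n.+1 ** x = x ** (gpow x n ** x)); rewrite IH gmulA.
Qed.

Lemma gpow_sub (A : F -> Prop) (x : F) n : subgrp A -> A x -> A (gpow x n).
Proof. by case=> H1 HM _ Hx; elim: n => //= n IH; apply: HM. Qed.

Lemma gpow_one n : gpow (1') n = 1'.
Proof. by elim: n => //= n ->; rewrite gmul1. Qed.

Lemma gpow_inv (x : F) n : gpow (ginv x) n = ginv (gpow x n).
Proof.
elim: n => /= [|n IH]; first by rewrite ginv1.
by rewrite ginvM -IH -gpowS'.
Qed.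

Lemma gpow_add (x : F) a b : gpow x (a + b) = gpow x a ** gpow x b.
Proof.
elim: b => [|b IH]; first by rewrite addn0 /= mulg1_.
by rewrite addnS /= IH gmulA.
Qed.

Lemma gpow_mul (x : F) a b : gpow x (a * b) = gpow (gpow x a) b.
Proof.
elim: b => [|b IH]; first by rewrite muln0.
by rewrite mulnS addnC gpow_add IH.
Qed.

Lemma gpow1 (x : F) : gpow x 1 = x.
Proof. by rewrite /= gmul1. Qed.

Fixpoint lcomm (x : F) (fs : seq F) : F :=
  if fs is f :: fs' then lcomm (gcomm x f) fs' else x.

Lemma lcomm_one fs : lcomm 1' fs = 1'.
Proof. by elim: fs => //= f fs IH; rewrite I5. Qed.

Section IC.
Variable U : F -> Prop.
Hypothesis nU : nsg U.

Lemma ic_sub n : subgrp (iter_comm U n).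
Proof. by case: n => [|n]; [case: nU | exact: gen_subgrp]. Qed.

Lemma ic_norm n : normalp (iter_comm U n).
Proof. by case: n => [|n]; [case: nU | exact: comm_sub_normal]. Qed.

Lemma ic_dec n x : iter_comm U n.+1 x -> iter_comm U n x.
Proof.
elim: n x => [|n IH] x.
  apply: gen_min; last by case: nU.
  move=> z [a [b [Ha [_ ->]]]]; rewrite I4.
  case: nU => [[_ HM HV] HN]; apply: HM; [exact: HV | exact: HN].
exact: (comm_sub_mono IH).
Qed.

Lemma ic_decle m n x : m <= n -> iter_comm U n x -> iter_comm U m x.
Proof.
move=> le; rewrite -(subnKC le); elim: (n - m) x => [|d IH] x.
  by rewrite addn0.
by rewrite addnS => /ic_dec /IH.
Qed.

Lemma ic_lcomm r x fs : iter_comm U r x -> iter_comm U (r + size fs) (lcomm x fs).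
Proof.
elim: fs r x => [|f fs IH] r x /=; first by rewrite addn0.
move=> Hx; rewrite -addSnnS; apply: IH; apply: gen_in; by exists x, f.
Qed.
End IC.

Lemma ic_mono (A B : F -> Prop) n : (forall x, A x -> B x) ->
  forall x, iter_comm A n x -> iter_comm B n x.
Proof.
move=> sAB; elim: n => [|n IH] x; [exact: sAB | exact: (comm_sub_mono IH)].
Qed.

Lemma ic_shift (T U : F -> Prop) : (forall x, comm_sub T (@fullF F) x -> U x) ->
  forall n x, iter_comm T n.+1 x -> iter_comm U n x.
Proof.
move=> h; elim=> [|n IH] x; [exact: h | exact: (comm_sub_mono IH)].
Qed.

Lemma gamma_ic n x : gamma n.+1 x -> iter_comm (@fullF F) n x.
Proof.
elim: n x => [|n IH] x //; exact: (comm_sub_mono IH).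
Qed.

End Sub.

Section Cong.
Variable F : Grp.
Local Infix "**" := (@gmul F) (at level 40, left associativity).
Local Notation "1'" := (gone F).
Variable K : F -> Prop.
Hypothesis nK : nsg K.

Definition eqm (x y : F) := K (ginv x ** y).

Let K1 : K 1'. Proof. by case: nK => [[h _ _] _]. Qed.
Let KM x y : K x -> K y -> K (x ** y). Proof. by case: nK => [[_ h _] _]; apply: h. Qed.
Let KV x : K x -> K (ginv x). Proof. by case: nK => [[_ _ h] _]; apply: h. Qed.
Let KN x g : K x -> K (ginv g ** x ** g). Proof. by case: nK => _; apply. Qed.

Lemma eqm_refl x : eqm x x. Proof. by rewrite /eqm gmulV. Qed.
Lemma eqm_sym x y : eqm x y -> eqm y x.
Proof. by move=> /KV; rewrite /eqm ginvM ginvK. Qed.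
Lemma eqm_trans x y z : eqm x y -> eqm y z -> eqm x z.
Proof. by move=> h1 h2; move: (KM h1 h2); rewrite /eqm !gmulA gc2. Qed.
Lemma eqm_mulr x x' v : eqm x x' -> eqm (x ** v) (x' ** v).
Proof.
by move=> /(KN v); rewrite /eqm ginvM !gmulA.
Qed.
Lemma eqm_mull u y y' : eqm y y' -> eqm (u ** y) (u ** y').
Proof. by rewrite /eqm ginvM !gmulA gc1. Qed.
Lemma eqm_mul x x' y y' : eqm x x' -> eqm y y' -> eqm (x ** y) (x' ** y').
Proof. move=> h1 h2; apply: eqm_trans (eqm_mulr _ h1) (eqm_mull _ h2). Qed.
Lemma eqm_drop P Q kk : K kk -> eqm (P ** kk ** Q) (P ** Q).
Proof.
move=> Hk; rewrite /eqm !ginvM !gmulA gc1.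
by move: (KN Q (KV Hk)); rewrite -!gmulA.
Qed.
Lemma eqm_K x y : eqm x y -> K x -> K y.
Proof. by move=> h hx; move: (KM hx h); rewrite gmulA mulgV_ gmul1. Qed.

Lemma powK (Zs : F -> Prop) : subgrp Zs -> (forall w f, Zs w -> K (gcomm w f)) ->
  forall z y k, Zs z -> eqm (gpow (y ** z) k) (gpow y k ** gpow z k).
Proof.
move=> sZ cZ z y k Hz; elim: k => [|k IH].
  by rewrite /= mulg1_; apply: eqm_refl.
change (eqm (gpow (y ** z) k ** (y ** z)) (gpow y k ** y ** (gpow z k ** z))).
apply: eqm_trans (eqm_mulr _ IH) _.
have -> : gpow y k ** gpow z k ** (y ** z) = gpow y k ** (gpow z k ** y) ** z.
  by rewrite !gmulA.
rewrite (I3 (gpow z k) y).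
have -> : gpow y k ** (y ** gpow z k ** gcomm (gpow z k) y) ** z =
  (gpow y k ** y ** gpow z k) ** gcomm (gpow z k) y ** z by rewrite !gmulA.
have -> : gpow y k ** y ** (gpow z k ** z) = gpow y k ** y ** gpow z k ** z
  by rewrite gmulA.
apply: eqm_drop; apply: cZ; exact: gpow_sub.
Qed.

Lemma K_central w f : K w -> K (gcomm w f).
Proof. by move=> hw; rewrite I4; apply: KM (KV hw) (KN f hw). Qed.

Lemma eqm_pow X Y k : eqm X Y -> K (gpow Y k) -> K (gpow X k).
Proof.
move=> /eqm_sym h hY.
have -> : X = Y ** (ginv Y ** X) by rewrite gmulA mulgV_ gmul1.
have sK : subgrp K by case: nK.
have hp := powK sK (fun w f hw => K_central f hw) Y k h.
apply: eqm_K (eqm_sym hp) _.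
apply: KM; first exact: hY.
exact: gpow_sub.
Qed.

End Cong.

Section Main.
Variable F : Grp.
Local Infix "**" := (@gmul F) (at level 40, left associativity).
Local Notation "1'" := (gone F).
Variables (U T : F -> Prop) (c k : nat).
Hypotheses (nU : nsg U) (sT : subgrp T) (hc : 0 < c)
  (hTU : forall x, comm_sub T (@fullF F) x -> U x)
  (hk : forall s, T s -> U (gpow s k)).

Let K := iter_comm U c.
Let nK : nsg K := conj (ic_sub nU c) (@ic_norm _ _ nU c).
Let sK : subgrp K := ic_sub nU c.
Let K1 : K 1'. Proof. by case: sK. Qed.
Let KM x y : K x -> K y -> K (x ** y). Proof. by case: sK => _ h _; apply: h. Qed.
Let KV x : K x -> K (ginv x). Proof. by case: sK => _ _ h; apply: h. Qed.

Lemma Hstep_from fs p :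
  (forall a a', iter_comm U p a -> iter_comm U p a' ->
     eqm K (lcomm (a ** a') fs) (lcomm a fs ** lcomm a' fs)) ->
  c <= p + size fs + 1 ->
  forall x e y, iter_comm U p x -> iter_comm U p.+1 e -> iter_comm U p y ->
  eqm K (lcomm (x ** e ** y) fs) (lcomm x fs ** lcomm y fs).
Proof.
move=> IH hle x e y hx he hy.
have sp := ic_sub nU p.
have hxe : iter_comm U p (x ** e) by case: sp => _ h _; apply: h => //; exact: ic_dec.
apply: (eqm_trans nK (IH _ _ hxe hy)).
apply: (eqm_mulr nK).
apply: (eqm_trans nK (IH _ _ hx (ic_dec nU he))).
have Ke : K (lcomm e fs).
  apply: (ic_decle nU _ (ic_lcomm fs he)).
  by move: hle; rewrite addn1 addSn.
rewrite -{2}[lcomm x fs]mulg1_ -[lcomm x fs ** lcomm e fs]mulg1_.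
exact: (eqm_drop nK).
Qed.

Lemma Hmult fs p a a' : c <= p + size fs + 1 ->
  iter_comm U p a -> iter_comm U p a' ->
  eqm K (lcomm (a ** a') fs) (lcomm a fs ** lcomm a' fs).
Proof.
elim: fs p a a' => [|f fs IH] p a a' hle ha ha'.
  exact: eqm_refl.
rewrite /= I1.
apply: (@Hstep_from fs p.+1).
- move=> b b' hb hb'; apply: (IH p.+1) => //.
  by move: hle; rewrite /= (addnS p) addSn.
- by move: hle; rewrite /= (addnS p) addSn.
- by apply: gen_in; exists a, f.
- by apply: gen_in; exists (gcomm a f), a'; split => //; apply: gen_in; exists a, f.
- by apply: gen_in; exists a', f.
Qed.


Lemma Zc_central w f : iter_comm U c.-1 w -> K (gcomm w f).
Proof.
move=> hw; rewrite /K -(prednK hc); apply: gen_in; by exists w, f.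
Qed.

Lemma G0 a a' f fs : T a -> T a' -> size fs = c.-1 ->
  eqm K (lcomm (a ** a') (f :: fs)) (lcomm a (f :: fs) ** lcomm a' (f :: fs)).
Proof.
move=> ha ha' hs.
have ar : c <= 0 + size fs + 1 by rewrite hs add0n addn1 prednK.
have hx : U (gcomm a f) by apply: hTU; apply: gen_in; exists a, f.
have hy : U (gcomm a' f) by apply: hTU; apply: gen_in; exists a', f.
rewrite /= I1.
apply: (@Hstep_from fs 0).
- by move=> b b' hb hb'; exact: (Hmult ar hb hb').
- exact: ar.
- exact: hx.
- by apply: gen_in; exists (gcomm a f), a'.
- exact: hy.
Qed.

Lemma P0 a fs : T a -> size fs = c -> K (gpow (lcomm a fs) k).
Proof.
move=> ha; case: fs => [|f fs] /= hs.
  by move: hc; rewrite -hs.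
have hs' : size fs = c.-1 by rewrite -hs.
have claim : forall j, eqm K (lcomm (gpow a j) (f :: fs)) (gpow (lcomm a (f :: fs)) j).
  elim=> [|j IH].
    by rewrite (_ : gpow a 0 = 1') // lcomm_one; apply: (eqm_refl nK).
  change (eqm K (lcomm (gpow a j ** a) (f :: fs))
               (gpow (lcomm a (f :: fs)) j ** lcomm a (f :: fs))).
  apply: (eqm_trans nK (G0 f (gpow_sub j sT ha) ha hs')).
  exact: (eqm_mulr nK).
have hU : K (lcomm (gpow a k) (f :: fs)).
  have := ic_lcomm (f :: fs) (hk ha : iter_comm U 0 (gpow a k)).
  by rewrite add0n => h; rewrite /K -hs.
exact (eqm_K nK (claim k) hU).
Qed.

Lemma Pi i : i <= c -> forall a, iter_comm T i a ->
  forall fs, size fs + i = c -> K (gpow (lcomm a fs) k).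
Proof.
elim: i => [|i IH] hi a ha fs hs.
  by apply: P0 ha _; rewrite addn0 in hs.
move: ha; rewrite /= /comm_sub => ha.
have ar : c <= i + size fs + 1.
  by rewrite -hs (addnS (size fs)) addn1 addnC.
have ar2 : c.-1 = i + size fs.
  by rewrite -hs (addnS (size fs)) /= addnC.
elim: ha fs hs ar ar2 => [z [b [f [hb [_ ->]]]] | | x y hx IHx hy IHy | x hx IHx] fs hs ar ar2.
- apply: (IH (ltnW hi) b hb (f :: fs)).
  by rewrite /= addSnnS.
- by rewrite lcomm_one gpow_one.
- have hxU : iter_comm U i x := @ic_shift F T U hTU i x hx.
  have hyU : iter_comm U i y := @ic_shift F T U hTU i y hy.
  have hm := Hmult ar hxU hyU.
  have hv : iter_comm U c.-1 (lcomm y fs) by rewrite ar2; exact: ic_lcomm.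
  apply: (eqm_pow nK hm).
  have hp := powK nK (ic_sub nU c.-1) (fun w f hw => Zc_central f hw) (lcomm x fs) k hv.
  apply: (eqm_K nK (eqm_sym nK hp)).
  by apply: KM; [exact: IHx fs hs ar ar2 | exact: IHy fs hs ar ar2].
- have hxU : iter_comm U i x := @ic_shift F T U hTU i x hx.
  have hxU' : iter_comm U i (ginv x) by case: (ic_sub nU i) => _ _ h; apply: h.
  have hm := Hmult ar hxU hxU'.
  rewrite mulgV_ lcomm_one /eqm ginv1 gmul1 in hm.
  have h2 : eqm K (lcomm (ginv x) fs) (ginv (lcomm x fs)).
    by rewrite /eqm -ginvM; apply: KV.
  apply: (eqm_pow nK h2).
  by rewrite gpow_inv; apply: KV; apply: IHx fs hs ar ar2.
Qed.

Lemma step y : iter_comm T c y -> iter_comm U c (gpow y k).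
Proof. move=> hy; exact (@Pi c (leqnn c) y hy [::] (add0n c)). Qed.

End Main.

Section MC.
Local Open Scope group_scope.
Variables (gT : finGroupType) (G : {group gT}).

Lemma exp_quot (H : {group gT}) x : G \subset 'N(H) -> x \in G ->
  x ^+ exponent (G / H) \in H.
Proof.
move=> nHG xG; have xN := subsetP nHG x xG.
apply: coset_idr; first exact: groupX.
by rewrite morphX //; apply: expg_exponent; apply: mem_quotient.
Qed.

Lemma exp_quot_dvd (H : {group gT}) n : G \subset 'N(H) ->
  (forall x, x \in G -> x ^+ n \in H) -> exponent (G / H) %| n.
Proof.
move=> nHG h; apply/exponentP => xb /morphimP [x xN xG ->].
by rewrite -morphX //; apply: coset_id; apply: h.
Qed.

Lemma lcn_step j m :
  (forall x, x \in 'L_j.+1(G) -> x ^+ m \in 'L_j.+2(G)) ->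
  forall x, x \in 'L_j.+2(G) -> x ^+ m \in 'L_j.+3(G).
Proof.
move=> IH.
set N := 'L_j.+3(G).
have nNG : G \subset 'N(N) by apply: lcn_norm.
have inG n g : g \in 'L_n(G) -> g \in G by apply: (subsetP (lcn_sub _ _)).
have inN g : g \in G -> g \in 'N(N) by apply: (subsetP nNG).
have Ncen g h : g \in 'L_j.+2(G) -> h \in G -> commute (coset N g) (coset N h).
  move=> hg hh; apply/commgP; apply/eqP.
  have e : coset N [~ g, h] = 1.
    by apply: coset_id; rewrite /N lcnSn; apply: mem_commg.
  have gG := inG _ _ hg.
  by move: e; rewrite morphR ?inN // => e; exact e.
have key : forall y, y \in 'L_j.+2(G) -> coset N (y ^+ m) = 1 -> y ^+ m \in N.
  by move=> y hy; apply: coset_idr; apply: groupX; apply: inN; apply: (inG j.+2).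
have gen_case u v : u \in 'L_j.+1(G) -> v \in G -> coset N ([~ u, v] ^+ m) = 1.
  move=> hu hv.
  have uG := inG _ _ hu.
  have cu : commute (coset N u) [~ coset N u, coset N v].
    rewrite -morphR ?inN //; apply: commute_sym; apply: Ncen => //.
    by rewrite lcnSn; apply: mem_commg.
  rewrite morphX ?inN ?groupR // morphR ?inN // -commXg //.
  rewrite -morphX ?inN // -morphR ?inN ?groupX //; apply: coset_id.
  by rewrite /N lcnSn; apply: mem_commg => //; apply: IH.
rewrite lcnSn /commutator => x /gen_prodgP [n [c hc ->]].
suff : \prod_(i < n) c i \in 'L_j.+2(G) /\ coset N ((\prod_(i < n) c i) ^+ m) = 1.
  by case=> h1 h2; apply: key.
elim: n c hc => [|n IHn] c hc.
  by rewrite big_ord0 expg1n group1 morph1.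
rewrite big_ord_recr /=.
have [h1 h2] := IHn (fun i => c (widen_ord (leqnSn n) i)) (fun i => hc _).
case/imset2P: (hc ord_max) => u v hu hv ->.
have wL : [~ u, v] \in 'L_j.+2(G) by rewrite lcnSn; apply: mem_commg.
have aG := inG _ _ h1; have wG := inG _ _ wL.
split; first by rewrite groupM.
rewrite morphX ?inN; last by rewrite groupM.
rewrite morphM ?inN // expgMn; last exact: Ncen.
rewrite -!morphX ?inN //.
have e1 : coset_morphism N ((\prod_(i < n) c (widen_ord (leqnSn n) i)) ^+ m) = 1 := h2.
have e2 : coset_morphism N ([~ u, v] ^+ m) = 1 := gen_case u v hu hv.
by rewrite e1 e2 mulg1.
by [].
Qed.

Lemma lcn_exp j x : x \in 'L_j.+1(G) -> x ^+ exponent (G / 'L_2(G)) \in 'L_j.+2(G).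
Proof.
elim: j x => [|j IH] x hx.
  by apply: exp_quot => //; apply: lcn_norm.
exact: lcn_step.
Qed.

Lemma m_le j : 1 <= j -> exponent (G / 'L_2(G)) <= exponent (G / 'L_j.+1(G)).
Proof.
move=> hj; apply: dvdn_leq; first exact: exponent_gt0.
apply: exp_quot_dvd; first exact: lcn_norm.
move=> x xG; apply: (subsetP (lcn_sub_leq G (_ : 2 <= j.+1))) => //.
by apply: exp_quot => //; apply: lcn_norm.
Qed.
End MC.

Theorem corollary27 (gT : finGroupType) (G : {group gT}) (c t : nat)
  (hc : 1 <= c) (hnil : nilpotent G) (ht : nil_class G = t) (ht1 : 1 <= t)
  (F : Grp) (hF : is_free F) (pi : F -> gT)
  (hpi : forall x y, pi (gmul x y) = (pi x * pi y)%g)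
  (hin : forall x, pi x \in G)
  (hsurj : forall g, g \in G -> exists x, pi x = g) :
  let R := fun x : F => pi x = 1%g in
  cmult_exp_le R c
    (exponent (G / 'L_2(G)) *
     \prod_(1 <= j < t) minn (exponent (G / 'L_j.+1(G))) (exponent 'L_j.+1(G)))
  /\ (forall p e : nat, prime p -> (p.-group G)%g -> exponent G = p ^ e ->
        cmult_exp_le R c (p ^ (e * t))).
Proof.
move=> R.
have pi1 : pi (gone F) = 1%g.
  have h := hpi (gone F) (gone F); rewrite gmul1 in h.
  by apply: (@mulIg _ (pi (gone F))); rewrite mul1g -h.
have piV x : pi (ginv x) = (pi x)^-1%g.
  by rewrite -[pi (ginv x)]mulg1 -(mulgV (pi x)) mulgA -hpi gmulV pi1 mul1g.
have piC x y : pi (gcomm x y) = [~ pi x, pi y]%g.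
  by rewrite /gcomm !hpi !piV /commg /conjg !mulgA.
have piX x n : pi (gpow x n) = (pi x ^+ n)%g.
  by elim: n => [|n IH] //=; rewrite hpi IH expgSr.
set m := exponent (G / 'L_2(G)).
pose kk j := minn m (exponent 'L_j(G)).
pose S j := fun x : F => pi x \in ('L_j(G))%g.
have sS j : subgrp (S j).
  split; rewrite /S ?pi1 ?group1 // => x y; rewrite ?hpi ?piV.
    exact: groupM.
  by rewrite groupV.
have nS j : nsg (S j).
  split => // x g; rewrite /S !hpi piV => hx.
  have -> : ((pi g)^-1 * pi x * pi g = pi x ^ pi g)%g by rewrite /conjg mulgA.
  by rewrite memJ_norm // (subsetP (lcn_norm j G)).
have cS j x : comm_sub (S j) (@fullF F) x -> S j.+1 x.
  move=> hx; refine (gen_min _ (sS j.+1) hx).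
  move=> z [a [b [ha [_ ->]]]]; rewrite /S piC.
  by apply: (subsetP (lcnSnS j G)); apply: mem_commg.
have hk j s : S j.+1 s -> S j.+2 (gpow s (kk j.+1)).
  rewrite /S piX /kk => hs.
  case: (leqP m (exponent 'L_j.+1(G))) => h.
    by apply: lcn_exp.
  rewrite expg_exponent //; exact: group1.
have chain mm : forall x, gamma c.+1 x ->
    iter_comm (S mm.+1) c (gpow x (\prod_(1 <= j < mm.+1) kk j)).
  elim: mm => [|mm IH] x hx.
    rewrite big_geq // gpow1.
    apply: (ic_mono _ (gamma_ic hx)) => y _; exact: hin.
  rewrite big_nat_recr //= gpow_mul.
  apply: (step (nS _) (sS _) hc (cS _) (hk _)).
  exact: IH.
have L1 : ('L_t.+1(G) = 1)%g by apply/lcn_nil_classP => //; rewrite ht.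
have SR x : S t.+1 x -> R x by rewrite /S L1 inE => /eqP.
set n := \prod_(1 <= j < t.+1) kk j.
have npos : 0 < n.
  apply: prodn_gt0 => j; rewrite /kk leq_min exponent_gt0 exponent_gt0 //.
have main : forall x, R x /\ gamma c.+1 x -> iter_comm R c (gpow x n).
  move=> x [_ hx]; apply: (ic_mono SR); exact: chain.
split.
  exists n; split => //; rewrite npos /=.
  rewrite /n big_nat_recl // leq_mul //; first exact: geq_minl.
  rewrite big_nat_cond [X in _ <= X]big_nat_cond.
  apply: leq_prod => j /andP [/andP [hj _] _].
  rewrite /kk leq_min geq_minr andbT.
  exact: leq_trans (geq_minl _ _) (m_le G hj).
move=> p e _ _ hG.
exists n; split => //; rewrite npos /=.
rewrite expnM; have -> : (p ^ e) ^ t = \prod_(1 <= j < t.+1) p ^ e by rewrite prod_nat_const_nat subn1.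
apply: leq_prod => j _.
rewrite /kk -hG; apply: leq_trans (geq_minr _ _) _.
apply: dvdn_leq; first exact: exponent_gt0.
apply: exponentS; exact: lcn_sub.
Qed.
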